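(* The number of cyclic parking functions of length $n$ is $|\mathrm{CycPF}_n|=\sum_{i=0}^{n-1} i!\,(n-i)!$.
   Context: A parking preference is $p\in[n]^n$. Classical parking process: cars $1,\dots,n$ enter in order into spots $1,\dots,n$, initially unoccupied; car $i$ parks in the first unoccupied spot $k\ge p_i$ and fails if none. A classical parking function is a $p$ for which all cars park; its outcome is the permutation $\pi$ (one-line notation) with $\pi_k$ the car in spot $k$. For $i\in[n]$, $\mathrm{Inc}_i^n:=i(i+1)\cdots n\,12\cdots(i-1)$. A cyclic parking function is a classical parking function whose outcome equals $\mathrm{Inc}_i^n$ for some $i\in[n]$; $\mathrm{CycPF}_n$ is the set of these. *)

(* Defs.v *)
From mathcomp Require Import all_boot.
Set Warnings "-notation-overridden".


(* Conventions (0-indexed): cars, spots and preferences range over 'I_n,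
   i.e. the paper's value k corresponds to k-1 here. *)

(* State of the lot: spot k is [Some c] if car c parked there, [None] if empty.
   [None] as a whole state records that some car failed to park. *)
Definition park_state := option (seq (option nat)).

Definition first_free (s : seq (option nat)) (a : nat) : option nat :=
  let k := find (fun k => nth (Some 0) s k == None) (iota a (size s - a)) in
  if k < size s - a then Some (a + k) else None.

Definition park_step (st : park_state) (c a : nat) : park_state :=
  match st with
  | None => None
  | Some s => match first_free s a with
              | None => None
              | Some k => Some (set_nth None s k (Some c))
              end
  end.

Definition park_run (n : nat) (p : {ffun 'I_n -> 'I_n}) : park_state :=
  foldl (fun st (c : 'I_n) => park_step st c (p c)) (Some (nseq n None)) (enum 'I_n).

Definition outcome (n : nat) (p : {ffun 'I_n -> 'I_n}) : option (seq nat) :=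
  match park_run n p with
  | None => None
  | Some s => Some (map (odflt 0) s)
  end.

Definition is_parking_function (n : nat) (p : {ffun 'I_n -> 'I_n}) : bool :=
  outcome n p != None.

(* Inc_i^n = i (i+1) ... n 1 2 ... (i-1), 0-indexed: i, ..., n-1, 0, ..., i-1. *)
Definition Inc (n i : nat) : seq nat := iota i (n - i) ++ iota 0 i.

Definition is_cyclic_pf (n : nat) (p : {ffun 'I_n -> 'I_n}) : bool :=
  is_parking_function n p &&
  [exists i : 'I_n, outcome n p == Some (Inc n i)].

Definition CycPF (n : nat) : {set {ffun 'I_n -> 'I_n}} :=
  [set p | is_cyclic_pf n p].

(* Main.v *)
Require Import Defs.
From mathcomp Require Import all_boot zify.

Lemma ff_some s a k : first_free s a = Some k ->
  [/\ a <= k, k < size s, nth None s k = None &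
      forall j, a <= j < k -> nth None s j != None].
Proof.
rewrite /first_free; set r := iota _ _; set f := find _ _.
case: ifP => // H [<-].
have hs : has (fun k => nth (Some 0) s k == None) r by rewrite has_find size_iota.
have := nth_find 0 hs; rewrite -/f nth_iota // => /eqP E.
have ks : a + f < size s by lia.
split => //; first lia.
  by rewrite (set_nth_default (Some 0)).
move=> j /andP [aj jk].
have := before_find 0 (_ : j - a < f).
rewrite nth_iota; last by lia.
rewrite subnKC // (set_nth_default (Some 0)); last by lia.
by move=> E'; rewrite E' //; lia.
Qed.

Lemma ff_none s a : first_free s a = None ->
  forall j, a <= j < size s -> nth None s j != None.
Proof.
rewrite /first_free; set r := iota _ _; set f := find _ _.
case: ifP => // H _ j /andP [aj js].
have : ~~ has (fun k => nth (Some 0) s k == None) r.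
  by rewrite has_find -/f; move: H; rewrite size_iota => ->.
move/hasPn => /(_ j); rewrite mem_iota (set_nth_default (Some 0)) //.
apply; lia.
Qed.

Lemma ff_spec s a k : a <= k -> k < size s -> nth None s k = None ->
  (forall j, a <= j < k -> nth None s j != None) -> first_free s a = Some k.
Proof.
move=> ak ks sk hj.
case E: first_free => [k'|].
  have [ak' k's sk' hj'] := @ff_some _ _ _ E.
  case: (ltngtP k k') => // C.
  - by have := hj' k; rewrite ak C sk => /(_ isT).
  - by have := hj k'; rewrite ak' C sk' => /(_ isT).
  - by rewrite C.
by have := @ff_none _ _ E k; rewrite ak ks sk => /(_ isT).
Qed.


Definition qf n (p : {ffun 'I_n -> 'I_n}) (c : nat) : nat :=
  odflt 0 (omap (fun c' : 'I_n => val (p c')) (insub c)).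

Definition G n p (st : park_state) (c : nat) := park_step st c (qf n p c).

Definition run n p m := foldl (G n p) (Some (nseq n None)) (iota 0 m).

Lemma qfE n p (c : 'I_n) : qf n p c = p c.
Proof. by rewrite /qf valK. Qed.

Lemma foldl_ext (T R : Type) (f g : R -> T -> R) z s :
  (forall x y, f x y = g x y) -> foldl f z s = foldl g z s.
Proof. by move=> H; elim: s z => //= x s IH z; rewrite H IH. Qed.

Lemma foldl_map' (T T' R : Type) (f : R -> T' -> R) (h : T -> T') z s :
  foldl f z (map h s) = foldl (fun x y => f x (h y)) z s.
Proof. by elim: s z => //= x s IH z. Qed.

Lemma run_n n p : park_run n p = run n p n.
Proof.
rewrite /park_run /run -val_enum_ord foldl_map'.
by apply: foldl_ext => st c; rewrite /G qfE.
Qed.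

Lemma runS n p m : run n p m.+1 = G n p (run n p m) m.
Proof. by rewrite /run -addn1 iotaD foldl_cat. Qed.

Lemma foldl_None n p s : foldl (G n p) None s = None.
Proof. by elim: s. Qed.

Lemma run_split n p m m' : m <= m' -> run n p m' = foldl (G n p) (run n p m) (iota m (m' - m)).
Proof. by move=> H; rewrite /run -foldl_cat -iotaD subnKC. Qed.

Definition keeps k c (st : park_state) :=
  if st is Some s then (k < size s) && (nth None s k == Some c) else true.

Lemma keeps_step k c st c' a : keeps k c st -> keeps k c (park_step st c' a).
Proof.
case: st => [s|] //= /andP [ks /eqP sk].
case E: first_free => [k'|] //=.
have [_ k's sk' _] := @ff_some _ _ _ E.
rewrite size_set_nth nth_set_nth /=.
have -> : (k == k') = false by apply/negbTE/eqP => e; move: sk'; rewrite -e sk.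
by rewrite sk eqxx andbT; apply: leq_trans ks (leq_maxr _ _).
Qed.

Lemma keeps_fold n p k c st s : keeps k c st -> keeps k c (foldl (G n p) st s).
Proof. by elim: s st => //= x s IH st H; apply: IH; apply: keeps_step. Qed.


Definition Sf n i m k : option nat :=
  if n - i <= k then (if k - (n - i) < m then Some (k - (n - i)) else None)
  else if k < m - i then Some (i + k) else None.
Definition S n i m := mkseq (Sf n i m) n.
Definition tgt n i m := if m < i then n - i + m else m - i.
Definition cnd n i m a := if m < i then (n - i <= a) && (a <= n - i + m) else a <= m - i.

Lemma nth_S n i m k : k < n -> nth None (S n i m) k = Sf n i m k.
Proof. by move=> kn; rewrite /S nth_mkseq. Qed.

Lemma size_S n i m : size (S n i m) = n.
Proof. by rewrite size_mkseq. Qed.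

Lemma step_set n i m : i < n -> m < n ->
  set_nth None (S n i m) (tgt n i m) (Some m) = S n i m.+1.
Proof.
move=> iz mn; have tn : tgt n i m < n by rewrite /tgt; case: ifP; lia.
apply: (@eq_from_nth _ None).
  by rewrite size_set_nth !size_S; apply/maxn_idPr.
move=> k; rewrite size_set_nth size_S (maxn_idPr tn) => kn.
rewrite nth_set_nth /= !nth_S // /Sf /tgt.
case: (ltnP m i) => mi /=;
  case: (k =P _) => [->|ne]; repeat case: ifP => ?; try done; try (congr Some; lia); lia.
Qed.

Lemma step_iff n i m a : i < n -> m < n ->
  (first_free (S n i m) a = Some (tgt n i m)) <-> cnd n i m a.
Proof.
move=> iz mn; have tn : tgt n i m < n by rewrite /tgt; case: ifP; lia.
rewrite /cnd; case: (ltnP m i) => mi /=.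
  split.
    move=> E; have [ha _ _ hj] := @ff_some _ _ _ E.
    move: ha; rewrite /tgt mi => ha.
    rewrite ha andbT; case: (leqP (n - i) a) => // an.
    have := hj (n - i).-1; rewrite nth_S; last by lia.
    rewrite /Sf /tgt mi.
    have -> : (n - i <= (n - i).-1) = false by lia.
    have -> : ((n - i).-1 < m - i) = false by lia.
    rewrite eqxx => H; suff : false by [].
    by apply: H; lia.
  move=> C; apply: ff_spec.
  - by rewrite /tgt mi; lia.
  - by rewrite size_S.
  - by rewrite nth_S // /Sf /tgt mi; repeat case: ifP => ?; try done; lia.
  move=> j /andP [aj jt]; rewrite nth_S; last by lia.
  move: jt; rewrite /Sf /tgt mi => jt; repeat case: ifP => ? //; lia.
have ti : (m < i) = false by lia.
split.
  move=> E; have [ha _ _ hj] := @ff_some _ _ _ E.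
  by move: ha; rewrite /tgt ti.
move=> C; apply: ff_spec.
- by rewrite /tgt ti.
- by rewrite size_S.
- by rewrite nth_S // /Sf /tgt ti; repeat case: ifP => ?; try done; lia.
move=> j /andP [aj jt]; rewrite nth_S; last by lia.
move: jt; rewrite /Sf /tgt ti => jt; repeat case: ifP => ? //; lia.
Qed.


Lemma S0 n i : S n i 0 = nseq n None.
Proof.
apply: (@eq_from_nth _ None); first by rewrite size_S size_nseq.
move=> k; rewrite size_S => kn; rewrite nth_S // nth_nseq kn /Sf.
by repeat case: ifP => ? //; lia.
Qed.

Lemma nth_Inc n i k : i < n -> k < n ->
  nth 0 (Inc n i) k = if k < n - i then i + k else k - (n - i).
Proof.
move=> iz kn; rewrite /Inc nth_cat size_iota.
by case: ifP => H; rewrite nth_iota //; lia.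
Qed.

Lemma Sn_Inc n i : i < n -> map (odflt 0) (S n i n) = Inc n i.
Proof.
move=> iz; apply: (@eq_from_nth _ 0).
  by rewrite size_map size_S /Inc size_cat !size_iota; lia.
move=> k; rewrite size_map size_S => kn.
rewrite (nth_map None) ?size_S // nth_S // nth_Inc // /Sf.
by repeat case: ifP => ? //=; lia.
Qed.

Lemma fwd n i (p : {ffun 'I_n -> 'I_n}) : i < n -> (forall c : 'I_n, cnd n i c (p c)) ->
  outcome n p = Some (Inc n i).
Proof.
move=> iz H.
have R : forall m, m <= n -> run n p m = Some (S n i m).
  elim=> [|m IH] mn; first by rewrite /run /= S0.
  rewrite runS IH; last by lia.
  have mn' : m < n by [].
  have := H (Ordinal mn'); rewrite -qfE => /= C.
  rewrite /G /= (proj2 (step_iff _ _ _ _ iz mn') C) step_set //.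
rewrite /outcome run_n R // Sn_Inc //.
Qed.

Lemma bwd n i (p : {ffun 'I_n -> 'I_n}) : i < n -> outcome n p = Some (Inc n i) ->
  forall c : 'I_n, cnd n i c (p c).
Proof.
move=> iz; rewrite /outcome run_n.
case Rn: (run n p n) => [s|] // [Es].
have R : forall m, m <= n -> run n p m = Some (S n i m) /\
     forall c, c < m -> cnd n i c (qf n p c).
  elim=> [|m IH] mn; first by rewrite /run /= S0.
  have [Rm Cm] := IH (ltnW mn).
  have Rs := runS n p m; rewrite Rm /G /= in Rs.
  case E: (first_free (S n i m) (qf n p m)) Rs => [k|] Rs.
    have [_ ks _ _] := @ff_some _ _ _ E; rewrite size_S in ks.
    have K : keeps k m (run n p n).
      rewrite (@run_split n p _ _ mn); apply: keeps_fold.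
      rewrite Rs /= size_set_nth nth_set_nth /= eqxx; apply/andP; split=> //.
      by apply: leq_trans (leq_maxl _ _).
    rewrite Rn /= in K; case/andP: K => ksz /eqP sk.
    have : nth 0 (Inc n i) k = m by rewrite -Es (nth_map None) // sk.
    rewrite nth_Inc // => Hm.
    have kt : k = tgt n i m by rewrite /tgt; case: ifP => ?; case: ifP Hm => ?; lia.
    rewrite kt in E Rs.
    split; first by rewrite Rs step_set.
    move=> c; rewrite ltnS leq_eqVlt => /orP [/eqP ->|]; last exact: Cm.
    by apply/(step_iff _ _ _ _ iz mn).
  by move: Rn; rewrite (@run_split n p _ _ mn) Rs foldl_None.
move=> c; have [_ Cn] := R n (leqnn n).
by rewrite -qfE; apply: Cn.
Qed.


Definition Aset n i : {set {ffun 'I_n -> 'I_n}} :=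
  [set p : {ffun 'I_n -> 'I_n} | [forall c : 'I_n, cnd n i c (p c)]].

Lemma card_fam n (F : 'I_n -> pred 'I_n) :
  #|[set p : {ffun 'I_n -> 'I_n} | [forall c, p c \in F c]]| = \prod_c #|F c|.
Proof.
have := (@card_family _ (fun _ => 'I_n) F). rewrite foldrE big_map big_enum /= => <-.
apply: eq_card => p. rewrite inE. apply/forallP/familyP => H x; exact: H.
Qed.

Lemma count_range lo hi n : lo <= hi -> hi <= n ->
  count (fun a => lo <= a < hi) (iota 0 n) = hi - lo.
Proof.
move=> lh hn.
rewrite -(subnKC lh) -{1}(subnKC hn) -(subnKC lh) !iotaD !count_cat add0n.
rewrite (eq_in_count (a2 := pred0)) ?count_pred0; last first.
  by move=> x; rewrite mem_iota => /andP [_ ?] /=; apply/negbTE; lia.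
rewrite (eq_in_count (a2 := predT) (s := iota lo _)) ?count_predT ?size_iota; last first.
  by move=> x; rewrite mem_iota => /andP [? ?] /=; apply/andP; split; lia.
rewrite (eq_in_count (a2 := pred0) (s := iota (lo + _) _)) ?count_pred0; last first.
  by move=> x; rewrite mem_iota => /andP [? _] /=; apply/negbTE; lia.
lia. Qed.

Lemma card_range n lo hi : lo <= hi -> hi <= n ->
  #|[pred a : 'I_n | lo <= a < hi]| = hi - lo.
Proof.
move=> lh hn; rewrite -sum1_card -(big_mkord (fun a => lo <= a < hi) (fun _ => 1)).
by rewrite /index_iota subn0 sum1_count count_range. Qed.

Lemma prod_fact n i : i <= n ->
  \prod_(c < n) (if c < i then c.+1 else (c - i).+1) = i`! * (n - i)`!.
Proof.
move=> iz.
rewrite -(big_mkord predT (fun c => if c < i then c.+1 else (c - i).+1)).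
rewrite (big_cat_nat (leq0n i) iz) /=.
rewrite (@eq_big_nat _ _ _ 0 i _ (fun c => c.+1)); last by move=> c /andP [_ ->].
rewrite (@eq_big_nat _ _ _ i n _ (fun c => (c - i).+1)); last first.
  by move=> c /andP [ic _]; rewrite ltnNge ic.
have := big_addn 0 n i predT (fun c => (c - i).+1); rewrite add0n => ->.
rewrite !fact_prod !big_add1 /=.
congr (_ * _); apply: eq_big_nat => c _ /=; lia.
Qed.

Lemma card_A n i : i < n -> #|Aset n i| = i`! * (n - i)`!.
Proof.
move=> iz.
have -> : Aset n i = [set p : {ffun 'I_n -> 'I_n} |
           [forall c, p c \in [pred a : 'I_n | cnd n i c a]]].
  by apply/setP => p; rewrite !inE.
rewrite card_fam -(@prod_fact n i (ltnW iz)); apply: eq_bigr => c _.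
case: (ltnP c i) => ci.
  transitivity #|[pred a : 'I_n | n - i <= a < n - i + c.+1]|.
    by apply: eq_card => a; rewrite !inE /cnd ci; lia.
  rewrite card_range; lia.
transitivity #|[pred a : 'I_n | 0 <= a < (c - i).+1]|.
  by apply: eq_card => a; rewrite !inE /cnd ltnNge ci /=; lia.
move: (ltn_ord c) => cn; rewrite card_range; lia.
Qed.


Lemma inCyc n p : (p \in CycPF n) = [exists i : 'I_n, p \in Aset n i].
Proof.
rewrite inE /is_cyclic_pf; apply/andP/existsP.
  case=> _ /existsP [i /eqP H]; exists i; rewrite inE; apply/forallP.
  exact: (@bwd _ _ _ (ltn_ord i) H).
case=> i; rewrite inE => /forallP H.
have E := @fwd _ _ _ (ltn_ord i) H.
split; first by rewrite /is_parking_function E.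
by apply/existsP; exists i; rewrite E.
Qed.

Lemma Adisj n p (i j : 'I_n) : p \in Aset n i -> p \in Aset n j -> i = j.
Proof.
rewrite !inE => /forallP Hi /forallP Hj.
have := @fwd _ _ _ (ltn_ord i) Hi; rewrite (@fwd _ _ _ (ltn_ord j) Hj) => [[E]].
apply: val_inj.
have n0 : 0 < n by apply: leq_ltn_trans (ltn_ord i).
have := @nth_Inc _ _ _ (ltn_ord i) n0; rewrite -E (@nth_Inc _ _ _ (ltn_ord j) n0).
by move: (ltn_ord i) (ltn_ord j); rewrite /=; repeat case: ifP => ?; lia.
Qed.

Theorem corollary3p3 (n : nat) :
  #|CycPF n| = \sum_(0 <= i < n) i`! * (n - i)`!.
Proof.
rewrite big_mkord -sum1_card big_mkcond /=.
rewrite (eq_bigr (fun p => \sum_(i < n) (if p \in Aset n i then 1 else 0))); last first.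
  move=> p _; rewrite inCyc; case: existsP => [[i Hi]|H].
    rewrite (bigD1 i) //= Hi big1 // => j /negbTE ji.
    by case: ifP => // Hj; rewrite (@Adisj _ _ _ _ Hj Hi) eqxx in ji.
  by rewrite big1 // => i _; case: ifP => // Hi; case: H; exists i.
rewrite exchange_big /=; apply: eq_bigr => i _.
by rewrite -big_mkcond sum1_card card_A.
Qed.
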